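(* Let $n,f,\ell,p$ be positive integers with $f$ even, $n=pf$ and $\ell+3\le f/2$. Let $\mathcal{C}_1\subseteq\{0,1\}^{f/2}$ be the set of binary sequences $\mathbf{a}=(a_1,\dots,a_{f/2})$ that begin with $0^\ell1$, end with $1$, and such that $(a_{\ell+1},\dots,a_{f/2})$ does not contain $0^\ell$ as a substring. Let $\mathcal{C}_2\subseteq\{0,1\}^{f/2}$ be the set of binary sequences of length $f/2$ that end with $1$, contain $01^\ell0$ as a substring, and do not contain $0^\ell$ as a substring. Let $\mathcal{C}=\{\mathbf{a}_1\mathbf{a}_2\cdots\mathbf{a}_{2p}:\mathbf{a}_1\in\mathcal{C}_1,\ \mathbf{a}_2,\dots,\mathbf{a}_{2p}\in\mathcal{C}_2\}\subseteq\{0,1\}^n$ (concatenation). Then $\mathcal{C}$ is an MU code and $\mathcal{C}$ is an $f$-APD code.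
   Context: $0^\ell$ denotes $\ell$ zeros, $1^\ell$ denotes $\ell$ ones; a substring is a block of consecutive entries. For $\mathbf{a}=(a_1,\dots,a_n)$ write $\mathbf{a}_i^j=(a_i,\dots,a_j)$ if $i\le j$ and $(a_i,a_{i-1},\dots,a_j)$ if $i>j$; $\bar{\mathbf{a}}$ is the bitwise complement. A code $\mathcal{C}\subseteq\{0,1\}^n$ is MU (mutually uncorrelated) if for all not necessarily distinct $\mathbf{a},\mathbf{b}\in\mathcal{C}$ and all $1\le l<n$, $\mathbf{a}_1^l\ne\mathbf{b}_{n-l+1}^n$. It is $f$-APD if for all not necessarily distinct $\mathbf{a},\mathbf{b}\in\mathcal{C}$ and all $1\le i,j\le n+1-f$, $\bar{\mathbf{a}}_i^{f+i-1}\ne\mathbf{b}_j^{f+j-1}$ and $\bar{\mathbf{a}}_i^{f+i-1}\ne\mathbf{b}_{f+j-1}^{j}$. *)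

(* Defs.v *)
(* binary sequences are [seq bool] (false = 0, true = 1). *)
From mathcomp Require Import all_boot.
Set Implicit Arguments. Unset Strict Implicit. Unset Printing Implicit Defensive.

Definition code := seq bool -> Prop.

(* a_i^{j} for i <= j (1-indexed): window of length f starting at position i *)
Definition window (f i : nat) (a : seq bool) : seq bool := take f (drop i.-1 a).

Definition compl (a : seq bool) : seq bool := map negb a.

Definition is_MU (n : nat) (C : code) : Prop :=
  forall a b, C a -> C b -> forall l, 0 < l < n -> take l a <> drop (n - l) b.

(* f-APD code: for all a, b in C and 1 <= i, j <= n+1-f,
   compl(a_i^{f+i-1}) <> b_j^{f+j-1}  and  compl(a_i^{f+i-1}) <> b_{f+j-1}^{j}
   (the latter being the reversed window). *)
Definition is_APD (n f : nat) (C : code) : Prop :=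
  forall a b, C a -> C b -> forall i j, 1 <= i <= n + 1 - f -> 1 <= j <= n + 1 - f ->
    compl (window f i a) <> window f j b /\
    compl (window f i a) <> rev (window f j b).

Definition C1 (f l : nat) (a : seq bool) : Prop :=
  [/\ size a = f./2, prefix (rcons (nseq l false) true) a, last false a = true
    & ~~ infix (nseq l false) (drop l a)].

Definition C2 (f l : nat) (a : seq bool) : Prop :=
  [/\ size a = f./2, last false a = true,
      infix (false :: rcons (nseq l true) false) a
    & ~~ infix (nseq l false) a].

Definition Ccode (f l p : nat) : code := fun x =>
  exists (a1 : seq bool) (rest : seq (seq bool)),
    [/\ size rest = (2 * p).-1, C1 f l a1, (forall b, b \in rest -> C2 f l b)
      & x = a1 ++ flatten rest].

(* Main.v *)
Require Import Defs.
From mathcomp Require Import all_boot.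
From mathcomp Require Import zify.
Set Implicit Arguments. Unset Strict Implicit.

Lemma prefix_cat_split (T : eqType) (u s t : seq T) :
  prefix u (s ++ t) -> prefix u s \/ exists u2, u = s ++ u2 /\ prefix u2 t.
Proof.
elim: s u => [|x s IH] u /= H; first by right; exists u.
case: u H => [|y u] /=; first by left.
case/andP => /eqP -> /IH [H|[u2 [-> H]]].
  by left; rewrite /= eqxx H.
by right; exists u2.
Qed.

Lemma infix_cat_split (T : eqType) (u s t : seq T) : infix u (s ++ t) ->
  [\/ infix u s, infix u t | exists u1 u2, [/\ u = u1 ++ u2, u1 != [::],
     u2 != [::], suffix u1 s & prefix u2 t]].
Proof.
elim: s => [|x s IH] H; first by constructor 2.
rewrite cat_cons infix_consl in H.
case/orP: H => H.
  have [Hp|[u2 [Eu Hp]]] := @prefix_cat_split _ u (x :: s) t H.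
    by constructor 1; apply: prefixW.
  case: u2 Eu Hp => [|z u2] Eu Hp.
    by constructor 1; rewrite Eu cats0 infix_refl.
  by constructor 3; exists (x :: s), (z :: u2); split => //; rewrite suffix_refl.
case: (IH H) => [H1|H1|[u1 [u2 [E n1 n2 sf pf]]]].
- by constructor 1; rewrite infix_consl H1 orbT.
- by constructor 2.
- constructor 3; exists u1, u2; split => //.
  exact: suffix_trans sf (suffix_cons s x).
Qed.

Lemma last_suffix (s u : seq bool) : suffix u s -> u != [::] ->
  last false u = last false s.
Proof. by move=> /suffixP [s' ->]; case: u => // y u _; rewrite last_cat. Qed.

Lemma true_nseq m : (true \in nseq m false) = false.
Proof. by rewrite mem_nseq; case: (0 < m). Qed.

Lemma last_ne (s : seq bool) x : last false s = true -> last x s = true.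
Proof. by case: s. Qed.

Lemma nocross_nseq s t m : last false s = true ->
  ~~ infix (nseq m false) s -> ~~ infix (nseq m false) t ->
  ~~ infix (nseq m false) (s ++ t).
Proof.
move=> Ls Hs Ht; apply/negP => /infix_cat_split [H|H|[u1 [u2 [E n1 n2 sf pf]]]].
- by rewrite H in Hs.
- by rewrite H in Ht.
have := last_suffix sf n1; rewrite Ls => L1.
have Hm : true \in u1.
  case: u1 {E sf} n1 L1 => // y u1' _ /= <-; exact: mem_last.
have : true \in nseq m false by rewrite E mem_cat Hm.
by rewrite true_nseq.
Qed.

Lemma nocross_tz l s t : last false s = true ->
  ~~ infix (true :: nseq l false) s -> ~~ infix (nseq l false) t ->
  ~~ infix (true :: nseq l false) (s ++ t).
Proof.
move=> Ls Hs Ht; apply/negP => /infix_cat_split [H|H|[u1 [u2 [E n1 n2 sf pf]]]].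
- by rewrite H in Hs.
- by move: Ht; rewrite (consl_infix H).
have := last_suffix sf n1; rewrite Ls => L1.
case: u1 E n1 sf L1 => [//|y u1'] [Ey E'] _ sf L1.
case: u1' E' L1 sf => [|z w] E' L1 sf.
  by move: Ht; rewrite /= in E'; rewrite E' (prefixW pf).
have Hm : last z w \in z :: w := mem_last _ _.
rewrite /= in L1; rewrite L1 in Hm.
have : true \in nseq l false by rewrite E' mem_cat Hm.
by rewrite true_nseq.
Qed.

Lemma flatC2 f l rest : 0 < l -> (forall b, b \in rest -> C2 f l b) ->
  ~~ infix (nseq l false) (flatten rest) /\ last true (flatten rest) = true.
Proof.
move=> hl; elim: rest => [|b r IH] H /=.
  by split => //; case: (l) hl.
have [Sb Lb Ib Nb] := H b (mem_head _ _).
have [IH1 IH2] : ~~ infix (nseq l false) (flatten r) /\ last true (flatten r) = true.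
  by apply: IH => c hc; apply: H; rewrite inE hc orbT.
split; first exact: nocross_nseq.
by rewrite last_cat (last_ne true Lb).
Qed.

Lemma a1props f l a : C1 f l a ->
  (exists r, a = nseq l false ++ true :: r) /\
  ~~ infix (true :: nseq l false) a /\ ~~ infix (nseq l.+1 false) a.
Proof.
case=> Sa Pa La Na.
move/prefixP: Pa => [r Ea].
rewrite -cats1 -catA /= in Ea.
have Nt : ~~ infix (nseq l false) (true :: r).
  by move: Na; rewrite Ea drop_size_cat ?size_nseq.
split; first by exists r.
rewrite Ea; split; apply/negP => /infix_cat_split [H|H|[u1 [u2 [E n1 n2 sf pf]]]].
- by have := mem_infix H (mem_head _ _); rewrite true_nseq.
- by move: Nt; rewrite (consl_infix H).
- case: u1 E n1 sf => [//|y u1'] [<- _] _ sf.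
  by have := mem_infix (suffixW sf) (mem_head _ _); rewrite true_nseq.
- by have := size_infix H; rewrite !size_nseq ltnn.
- by move: Nt; rewrite (@consl_infix _ (nseq l false) _ false H).
- case: u2 E n2 pf => [//|y u2'] E _ /= /andP [/eqP Ey _].
  have : y \in nseq l.+1 false by rewrite E mem_cat mem_head orbT.
  by rewrite Ey true_nseq.
Qed.

Lemma size_flat (B : seq (seq bool)) h : (forall b, b \in B -> size b = h) ->
  size (flatten B) = size B * h.
Proof.
elim: B => [|b B IH] H //=.
rewrite size_cat H ?mem_head // IH ?mulSn // => c hc.
by apply: H; rewrite inE hc orbT.
Qed.

Lemma drop_flat (B : seq (seq bool)) h k : (forall b, b \in B -> size b = h) ->
  drop (k * h) (flatten B) = flatten (drop k B).
Proof.
elim: B k => [|b B IH] k H; first by case: k.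
case: k => [|k] /=; first by rewrite mul0n drop0.
rewrite mulSn drop_cat H ?mem_head // ltnNge leq_addr /= addKn IH // => c hc.
by apply: H; rewrite inE hc orbT.
Qed.

Lemma infix_take_cat (A blk W : seq bool) m : size A + size blk <= m ->
  infix blk (take m (A ++ blk ++ W)).
Proof.
move=> H; rewrite take_cat; case: ifP => H1; first lia.
rewrite take_cat; case: ifP => H2; first lia.
exact: infix_infix.
Qed.

Lemma win_block (B : seq (seq bool)) h s : 0 < h ->
  (forall b, b \in B -> size b = h) -> s + (h + h) <= size B * h ->
  exists2 k, 0 < k < size B & infix (nth [::] B k) (take (h + h) (drop s (flatten B))).
Proof.
move=> h0 HB Hs.
set q := s %/ h.
have Es := divn_eq s h; have Er := ltn_pmod s h0.
have Hk : q.+1 < size B.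
  rewrite -(ltn_pmul2r h0) mulSn; rewrite -/q in Es; lia.
exists q.+1; first by rewrite Hk.
set d := q.+1 * h - s.
have Hd1 : d + s = q.+1 * h by rewrite /d subnK // mulSn; rewrite -/q in Es; lia.
have Hd2 : d <= h by rewrite /d mulSn; rewrite -/q in Es; lia.
have HF := size_flat HB.
have Hd3 : d <= size (drop s (flatten B)) by rewrite size_drop HF; lia.
rewrite -(cat_take_drop d (drop s (flatten B))) drop_drop Hd1 (drop_flat _ HB).
rewrite (drop_nth [::] Hk) /=.
apply: infix_take_cat.
rewrite (size_takel Hd3) HB //; first lia.
exact: mem_nth.
Qed.

Lemma infix_map (g : bool -> bool) u s : infix u s -> infix (map g u) (map g s).
Proof. by move/infixP => [a [b ->]]; rewrite !map_cat infix_infix. Qed.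

Definition Z l := true :: rcons (nseq l false) true.

Lemma revZ l : rev (Z l) = Z l.
Proof. by rewrite /Z rev_cons rev_rcons rev_nseq. Qed.

Lemma Z_infix l s : infix (Z l) s -> infix (true :: nseq l false) s.
Proof. by rewrite /Z -rcons_cons -cats1 => /catr_infix. Qed.

Lemma Cprops n f l p x : 0 < l -> 0 < p -> ~~ odd f -> n = p * f ->
  Ccode f l p x ->
  [/\ size x = n, exists r, x = nseq l false ++ true :: r, last false x = true,
      forall c, ~~ infix (c :: nseq l false) x &
      forall i, 1 <= i <= n + 1 - f -> infix (Z l) (compl (window f i x))].
Proof.
move=> hl hp ef En [a1 [rest [Sr Ha1 Hr Ex]]].
have [[r Ea] [Na1 Na2]] := a1props Ha1.
have [NT LT] := flatC2 hl Hr.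
set h := f./2.
have Ef : f = h + h by rewrite -[f]odd_double_half (negbTE ef) add0n -addnn.
have HB : forall b, b \in a1 :: rest -> size b = h.
  move=> b; rewrite inE => /orP [/eqP ->|hb]; first by case: Ha1.
  by case: (Hr b hb).
have Sx : size x = n.
  rewrite Ex -/(flatten (a1 :: rest)) (size_flat HB) /= Sr En Ef.
  rewrite prednK; [nia|lia].
split => //.
- by exists (r ++ flatten rest); rewrite Ex Ea -catA.
- have La1 : last false a1 = true by case: Ha1.
  by rewrite Ex last_cat La1 LT.
- case.
    rewrite Ex; apply: nocross_tz => //; by case: Ha1.
  rewrite Ex; apply: (nocross_nseq (m := l.+1)) => //; first by case: Ha1.
  by apply/negP => /(@consl_infix _ (nseq l false) _ false); rewrite (negbTE NT).
move=> i Hi.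
have Hs : i.-1 + (h + h) <= size (a1 :: rest) * h.
  rewrite /= Sr.
  rewrite prednK; last lia.
  have : n = 2 * p * h by rewrite En Ef; lia.
  move: Hi; rewrite -Ef; nia.
have hp0 : 0 < h.
  have <- : size a1 = h by case: Ha1.
  by rewrite Ea size_cat /= addnS.
have [k /andP [k0 Hk] Hin] := @win_block (a1 :: rest) h i.-1 hp0 HB Hs.
rewrite /window Ef Ex -/(flatten (a1 :: rest)).
case: k k0 Hk Hin => // k _ Hk Hin.
have Hkr : nth [::] rest k \in rest by apply: mem_nth; rewrite /= in Hk.
have [_ _ I2 _] := Hr _ Hkr.
have := infix_map negb (infix_trans I2 Hin).
by rewrite /= map_rcons map_nseq.
Qed.

Theorem lemma5 (n f l p : nat) :
  0 < n -> 0 < f -> 0 < l -> 0 < p -> ~~ odd f -> n = p * f -> l + 3 <= f./2 ->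
  is_MU n (Ccode f l p) /\ is_APD n f (Ccode f l p).
Proof.
move=> hn hf hl hp ef En hlf.
split.
  move=> a b Ca Cb l' /andP [l0 ln] E.
  have [Sa [r Ea] La Na Wa] := Cprops hl hp ef En Ca.
  have [Sb [r' Eb] Lb Nb Wb] := Cprops hl hp ef En Cb.
  case: (leqP l' l) => Hl.
    have := congr1 (fun s => nth false s l'.-1) E => /=.
    rewrite nth_take; last by case: (l') l0.
    rewrite nth_drop Ea nth_cat size_nseq nth_nseq.
    have -> : l'.-1 < l by lia.
    have -> : n - l' + l'.-1 = (size b).-1 by rewrite Sb; lia.
    by rewrite nth_last Lb.
  have Ht : take l (drop (n - l') b) = nseq l false.
    by rewrite -E take_takel ?(ltnW Hl) // Ea take_size_cat ?size_nseq.
  set k := n - l'.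
  have k0 : 0 < k by rewrite /k; lia.
  have Hkb : k.-1 < size b by rewrite Sb /k; lia.
  have Eb2 : b = take k.-1 b ++ nth false b k.-1 :: nseq l false ++ drop l (drop k b).
    rewrite -Ht cat_take_drop -[k in drop k b](prednK k0) -drop_nth //.
    by rewrite cat_take_drop.
  have Hinf : infix (nth false b k.-1 :: nseq l false) b.
    by rewrite [X in infix _ X]Eb2 -cat_cons; exact: infix_infix.
  by move: (Nb (nth false b k.-1)); rewrite Hinf.
move=> a b Ca Cb i j Hi Hj.
have [Sa _ _ _ Wa] := Cprops hl hp ef En Ca.
have [Sb _ _ Nb _] := Cprops hl hp ef En Cb.
have Hwin : infix (window f j b) b.
  exact: infix_trans (infix_take _ _) (infix_drop _ _).
have HZ := Wa i Hi.
split => E.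
  have : infix (Z l) b by apply: infix_trans Hwin; rewrite -E.
  by move/Z_infix; rewrite (negbTE (Nb true)).
have : infix (Z l) b.
  apply: infix_trans Hwin.
  by rewrite -(revK (window f j b)) -E -revZ infix_rev.
by move/Z_infix; rewrite (negbTE (Nb true)).
Qed.
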